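(* Let $p$ be a prime, $k>0$ an integer, and $G_{p,k}=C_{p^\infty}\times C_k\times\mathbf{T}$ (a 1-dimensional Lie group). Every closed 1-dimensional subgroup of $G_{p,k}$ is of the form $D\times\mathbf{T}$, where $D$ is a subgroup of $C_{p^\infty}\times C_k$ (and every such set is a closed 1-dimensional subgroup). Moreover, the set of closed 1-dimensional subgroups is closed in $\mathcal{C}(G_{p,k})$, and the map $\pi^*:\mathcal{C}(C_{p^\infty}\times C_k)\to\mathcal{C}(G_{p,k})$, $D\mapsto\pi^{-1}(D)=D\times\mathbf{T}$, is a homeomorphism onto this set.
   Context: $\mathbf{T}$ is the circle group; $C_m\subset\mathbf{T}$ is the group of $m$-th roots of unity; $C_{p^\infty}=\bigcup_{\ell\ge1}C_{p^\ell}$ is the Prüfer $p$-group, with the discrete topology. $\pi:G_{p,k}\to C_{p^\infty}\times C_k$ is the projection onto the first two factors. $\mathcal{C}(G)$ denotes the space of closed subgroups of a locally compact group $G$ with the Chabauty topology, generated by the sets $\{H:H\cap K=\emptyset\}$ ($K$ compact) and $\{H:H\cap U\neq\emptyset\}$ ($U$ open). *)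

(* Defs.v *)
From HB Require Import structures.
From mathcomp Require Import all_boot all_order all_algebra.
From mathcomp Require Import all_classical all_reals.
From mathcomp Require Import trigo.
From mathcomp.real_closed Require Import complex.

Set Implicit Arguments.
Unset Strict Implicit.
Unset Printing Implicit Defensive.

Import Order.TTheory GRing.Theory Num.Theory.
Local Open Scope classical_set_scope.
Local Open Scope ring_scope.

(* Generic notions for a "space" given by a carrier set X : set T and   *)
(* a predicate [op] singling out its open subsets.                      *)

Definition compactIn (T : Type) (X : set T) (op : set T -> Prop) (K : set T) :=
  K `<=` X /\
  forall (I : Type) (U : I -> set T), (forall i, op (U i)) ->
    K `<=` \bigcup_(i in setT) U i ->
    exists F : set I, finite_set F /\ K `<=` \bigcup_(i in F) U i.

Definition closedIn (T : Type) (X : set T) (op : set T -> Prop) (F : set T) :=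
  F `<=` X /\ op (X `\` F).

Definition is_subgroup (T : Type) (X : set T) (one : T) (mul : T -> T -> T)
  (inv : T -> T) (H : set T) :=
  [/\ H `<=` X, H one,
      (forall x y, H x -> H y -> H (mul x y)) &
      (forall x, H x -> H (inv x))].

Definition closed_subgroups (T : Type) (X : set T) (op : set T -> Prop)
  (one : T) (mul : T -> T -> T) (inv : T -> T) : set (set T) :=
  [set H | is_subgroup X one mul inv H /\ closedIn X op H].

Definition chabauty_subbasic (T : Type) (X : set T) (op : set T -> Prop)
  (S : set (set T)) :=
  (exists K, compactIn X op K /\ S = [set H | H `&` K = set0]) \/
  (exists U, op U /\ S = [set H | H `&` U !=set0]).

(* Open sets of the topology on the family [C] generated by the         *)
(* (traces on C of the) subbasic sets: unions of finite intersections.  *)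
Definition chabauty_open (T : Type) (X : set T) (op : set T -> Prop)
  (C : set (set T)) (A : set (set T)) :=
  A `<=` C /\
  forall H, A H -> exists F : set (set (set T)), finite_set F /\
    (forall S, F S -> chabauty_subbasic X op S /\ S H) /\
    (forall H', C H' -> (forall S, F S -> S H') -> A H').

Section Groups.
Local Unset Implicit Arguments.
Variable R : realType.
Local Open Scope complex_scope.

Definition circle : set R[i] := [set z | `|z| = 1].
Definition roots_unity (m : nat) : set R[i] := [set z | z ^+ m = 1].
Definition prufer (p : nat) : set R[i] :=
  [set z | exists l : nat, (0 < l)%N /\ roots_unity (p ^ l) z].

Definition D0 (p k : nat) : set (R[i] * R[i]) :=
  [set d | prufer p d.1 /\ roots_unity k d.2].
Definition D0_open (p k : nat) (U : set (R[i] * R[i])) := U `<=` D0 p k.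
Definition D0_one : R[i] * R[i] := (1, 1).
Definition D0_mul (x y : R[i] * R[i]) : R[i] * R[i] := (x.1 * y.1, x.2 * y.2).
Definition D0_inv (x : R[i] * R[i]) : R[i] * R[i] := (x.1^-1, x.2^-1).

Definition Gpk (p k : nat) : set ((R[i] * R[i]) * R[i]) :=
  [set g | D0 p k g.1 /\ circle g.2].
(* product topology: discrete x discrete x circle (metric |z - w|) *)
Definition Gpk_open (p k : nat) (U : set ((R[i] * R[i]) * R[i])) :=
  U `<=` Gpk p k /\
  forall g, U g -> exists e : R, 0 < e /\
    forall w, circle w -> `|w - g.2| < e%:C -> U (g.1, w).
Definition G_one : (R[i] * R[i]) * R[i] := (D0_one, 1).
Definition G_mul (g h : (R[i] * R[i]) * R[i]) : (R[i] * R[i]) * R[i] :=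
  (D0_mul g.1 h.1, g.2 * h.2).
Definition G_inv (g : (R[i] * R[i]) * R[i]) : (R[i] * R[i]) * R[i] :=
  (D0_inv g.1, g.2^-1).

(* Lie algebra of G_{p,k} is R, with exponential map                    *)
(*   exp(X) = (1, 1, e^{2 pi i X}).                                     *)
Definition expG (X : R) : (R[i] * R[i]) * R[i] :=
  (D0_one, cos (2 * pi * X) +i* sin (2 * pi * X)).
Definition lie_algebra (H : set ((R[i] * R[i]) * R[i])) : set R :=
  [set X | forall t : R, H (expG (t * X))].
(* H is 1-dimensional: its Lie algebra (a subspace of R) is nonzero *)
Definition one_dimensional (H : set ((R[i] * R[i]) * R[i])) :=
  exists X, X != 0 /\ lie_algebra H X.

Definition CG (p k : nat) := closed_subgroups (Gpk p k) (@Gpk_open p k) G_one G_mul G_inv.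
Definition CD (p k : nat) := closed_subgroups (D0 p k) (@D0_open p k) D0_one D0_mul D0_inv.

Definition pistar (p k : nat) (D : set (R[i] * R[i])) : set ((R[i] * R[i]) * R[i]) :=
  [set g | Gpk p k g /\ D g.1].

End Groups.

(* Main.v *)
Require Import Defs.
From HB Require Import structures.
From mathcomp Require Import all_boot all_order all_algebra.
From mathcomp Require Import all_classical all_reals.
From mathcomp.real_closed Require Import complex.
From mathcomp Require Import trigo.
From mathcomp Require Import ring lra.
Import Order.TTheory GRing.Theory Num.Theory.
Local Open Scope classical_set_scope.
Local Open Scope ring_scope.
Set Implicit Arguments. Unset Strict Implicit.

Lemma circleC (R : realType) (a b : R) : circle R (Complex a b) <-> a ^+ 2 + b ^+ 2 = 1.
Proof.
rewrite /circle /= normc_def /=; split.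
  move=> [] h.
  have h0 : 0 <= a ^+ 2 + b ^+ 2 by rewrite addr_ge0 // sqr_ge0.
  by rewrite -(sqr_sqrtr h0) h expr1n.
by move=> ->; rewrite sqrtr1.
Qed.

Lemma circle_cos_sin (R : realType) (t : R) : circle R (Complex (cos t) (sin t)).
Proof. by apply/circleC; rewrite cos2Dsin2. Qed.

Lemma circle_param (R : realType) (z : R[i]) : circle R z ->
  exists t : R, z = Complex (cos t) (sin t).
Proof.
case: z => a b /circleC h.
have ha : -1 <= a <= 1 by apply/andP; split; nra.
have hs : sin (acos a) = `|b|.
  by rewrite sin_acos // -sqrtr_sqr; congr Num.sqrt; lra.
have [hb|hb] := lerP 0 b.
  by exists (acos a); rewrite acosK ?inE // hs ger0_norm.
exists (- acos a); rewrite cosN sinN acosK ?inE // hs ltr0_norm //.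
by rewrite opprK.
Qed.

Lemma circle1 (R : realType) : circle R 1.
Proof. by rewrite /circle /= normr1. Qed.

Lemma circleM (R : realType) (a b : R[i]) : circle R a -> circle R b -> circle R (a * b).
Proof. by rewrite /circle /= normrM => -> ->; rewrite mulr1. Qed.

Lemma circleV (R : realType) (a : R[i]) : circle R a -> circle R a^-1.
Proof. by rewrite /circle /= normfV => ->; rewrite invr1. Qed.

Lemma circle_neq0 (R : realType) (a : R[i]) : circle R a -> a != 0.
Proof. by rewrite /circle /= => h; apply/eqP => a0; move: h; rewrite a0 normr0 => /eqP; rewrite eq_sym oner_eq0. Qed.

Lemma roots1 (R : realType) m : roots_unity R m 1.
Proof. by rewrite /roots_unity /= expr1n. Qed.

Lemma rootsM (R : realType) m (a b : R[i]) : roots_unity R m a -> roots_unity R m b ->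
  roots_unity R m (a * b).
Proof. by rewrite /roots_unity /= exprMn => -> ->; rewrite mulr1. Qed.

Lemma rootsV (R : realType) m (a : R[i]) : roots_unity R m a -> roots_unity R m a^-1.
Proof. by rewrite /roots_unity /= exprVn => ->; rewrite invr1. Qed.

Lemma prufer1 (R : realType) p : prufer R p 1.
Proof. by exists 1%N; split => //; apply: roots1. Qed.

Lemma pruferM (R : realType) p (a b : R[i]) : prufer R p a -> prufer R p b ->
  prufer R p (a * b).
Proof.
move=> [l [l0 ha]] [m [m0 hb]]; exists (l + m)%N; split; first by rewrite addn_gt0 l0.
move: ha hb; rewrite /roots_unity /= expnD => ha hb.
rewrite exprMn; rewrite exprM ha expr1n mul1r.
by rewrite mulnC exprM hb expr1n.
Qed.

Lemma pruferV (R : realType) p (a : R[i]) : prufer R p a -> prufer R p a^-1.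
Proof. by move=> [l [l0 ha]]; exists l; split => //; apply: rootsV. Qed.

Lemma D0one (R : realType) p k : D0 R p k (D0_one R).
Proof. by split; [apply: prufer1 | apply: roots1]. Qed.

Lemma D0M (R : realType) p k x y : D0 R p k x -> D0 R p k y -> D0 R p k (D0_mul R x y).
Proof. by move=> [? ?] [? ?]; split; [apply: pruferM | apply: rootsM]. Qed.

Lemma D0V (R : realType) p k x : D0 R p k x -> D0 R p k (D0_inv R x).
Proof. by move=> [? ?]; split; [apply: pruferV | apply: rootsV]. Qed.

Definition DxT (R : realType) (D : set (R[i] * R[i])) : set ((R[i] * R[i]) * R[i]) :=
  [set g | D g.1 /\ circle R g.2].
Arguments DxT : clear implicits.

Definition proj (R : realType) (H : set ((R[i] * R[i]) * R[i])) : set (R[i] * R[i]) :=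
  [set d | exists w, H (d, w)].
Arguments proj : clear implicits.

Lemma DxT_subgroup (R : realType) p k D :
  is_subgroup (D0 R p k) (D0_one R) (@D0_mul R) (@D0_inv R) D ->
  is_subgroup (Gpk R p k) (G_one R) (@G_mul R) (@G_inv R) (DxT R D).
Proof.
case=> sD D1 DM DV; split.
- by move=> [d w] [/= /sD ? ?]; split.
- by split => //=; apply: circle1.
- by move=> [x a] [y b] [/= ? ?] [/= ? ?]; split => /=; [apply: DM | apply: circleM].
- by move=> [x a] [/= ? ?]; split => /=; [apply: DV | apply: circleV].
Qed.

Lemma DxT_closed (R : realType) p k D : D `<=` D0 R p k ->
  closedIn (Gpk R p k) (@Gpk_open R p k) (DxT R D).
Proof.
move=> sD; split.
  by move=> [d w] [/= /sD ? ?]; split.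
split; first by move=> g [].
move=> [d a] [[/= hd ha] hn]; exists 1; split => // w hw _; split; first by split.
by move=> [/= ? _]; apply: hn; split.
Qed.

Lemma DxT_onedim (R : realType) D : D (D0_one R) -> one_dimensional R (DxT R D).
Proof.
move=> D1; exists 1; split; first exact: oner_neq0.
by move=> t; split => //=; apply: circle_cos_sin.
Qed.

Lemma field_aux (R : realType) (t X q : R) : X != 0 -> q != 0 ->
  2 * q * (t / (2 * q * X) * X) = t.
Proof. by move=> X0 q0; field; rewrite X0 q0. Qed.

Lemma onedim_circle (R : realType) H : one_dimensional R H ->
  forall w, circle R w -> H (D0_one R, w).
Proof.
move=> [X [X0 hX]] w /circle_param [t ->].
have := hX (t / (2 * pi * X)); rewrite /expG.
have pi0 : pi != 0 :> R by rewrite gt_eqF // pi_gt0.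
by rewrite (field_aux t X0 pi0).
Qed.

Lemma proj_subgroup (R : realType) p k H :
  is_subgroup (Gpk R p k) (G_one R) (@G_mul R) (@G_inv R) H ->
  is_subgroup (D0 R p k) (D0_one R) (@D0_mul R) (@D0_inv R) (proj R H).
Proof.
case=> sH H1 HM HV; split.
- by move=> d [w /sH []].
- by exists 1.
- by move=> x y [a ha] [b hb]; exists (a * b); exact: (HM _ _ ha hb).
- by move=> x [a ha]; exists a^-1; exact: (HV _ ha).
Qed.

Lemma proj_eq (R : realType) p k H :
  is_subgroup (Gpk R p k) (G_one R) (@G_mul R) (@G_inv R) H ->
  (forall w, circle R w -> H (D0_one R, w)) -> H = DxT R (proj R H).
Proof.
move=> [sH H1 HM HV] hc; apply/seteqP; split.
  move=> [d w] hw; split; first by exists w.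
  by have [] := sH _ hw.
move=> [[d1 d2] w] [/= [a ha] hw].
have ha' : circle R a by have [] := sH _ ha.
have := HM _ _ ha (hc _ (circleM (circleV ha') hw)).
rewrite /G_mul /D0_mul /D0_one /= !mulr1 mulrA mulfV ?mul1r //.
exact: circle_neq0.
Qed.

Lemma disjE (T : Type) (A B : set T) : A `&` B = set0 <-> (forall x, A x -> B x -> False).
Proof.
split.
  by move=> h x ax bx; have : (A `&` B) x by []; rewrite h.
by move=> h; apply/seteqP; split => x // [ax bx]; case: (h x ax bx).
Qed.

Lemma compact_set1 (T : Type) (X : set T) (op : set T -> Prop) x : X x ->
  compactIn X op [set x].
Proof.
move=> Xx; split; first by move=> y ->.
move=> I U _ cov; have [i _ Ui] := cov x erefl.
exists [set i]; split; first exact: finite_set1.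
by move=> y ->; exists i.
Qed.

Lemma compact_proj (R : realType) p k (K : set ((R[i] * R[i]) * R[i])) :
  compactIn (Gpk R p k) (@Gpk_open R p k) K ->
  compactIn (D0 R p k) (@D0_open R p k) (fst @` K).
Proof.
move=> [sK cK]; split; first by move=> d [g /sK [? _] <-].
move=> I U oU cov.
pose V i := [set g | Gpk R p k g /\ U i g.1].
have oV : forall i, Gpk_open R p k (V i).
  move=> i; split; first by move=> g [].
  move=> g [[hd hc] hu]; exists 1; split => // w hw _; split => //.
have covV : K `<=` \bigcup_(i in setT) V i.
  move=> g Kg; have [i _ hi] := cov g.1 (ex_intro2 _ _ g Kg erefl).
  by exists i => //; split => //; apply: sK.
have [F [fF hF]] := cK I V oV covV.
exists F; split => // d [g Kg <-].
by have [i Fi [_ ?]] := hF g Kg; exists i.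
Qed.

Lemma compact_lift (R : realType) p k (K : set (R[i] * R[i])) :
  compactIn (D0 R p k) (@D0_open R p k) K ->
  compactIn (Gpk R p k) (@Gpk_open R p k) [set g | K g.1 /\ g.2 = 1].
Proof.
move=> [sK cK]; split.
  by move=> [d w] [/= /sK ? ->]; split => //; apply: circle1.
move=> I U oU cov.
pose W i := [set d | D0 R p k d /\ U i (d, 1)].
have oW : forall i, D0_open R p k (W i) by move=> i d [].
have covW : K `<=` \bigcup_(i in setT) W i.
  move=> d Kd; have [i _ hi] := cov (d, 1) (conj Kd erefl).
  by exists i => //; split => //; apply: sK.
have [F [fF hF]] := cK I W oW covW.
exists F; split => // [[d w]] [/= Kd ->].
by have [i Fi [_ ?]] := hF d Kd; exists i.
Qed.

Lemma pistarE (R : realType) p k D : D `<=` D0 R p k -> pistar R p k D = DxT R D.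
Proof.
move=> sD; apply/seteqP; split.
  by move=> g [[_ ?] ?]; split.
by move=> g [? ?]; split => //; split => //; apply: sD.
Qed.

Lemma translate6 (R : realType) p k S :
  chabauty_subbasic (Gpk R p k) (@Gpk_open R p k) S ->
  exists S', chabauty_subbasic (D0 R p k) (@D0_open R p k) S' /\
    forall D', D' `<=` D0 R p k -> (S' D' <-> S (pistar R p k D')).
Proof.
case=> [[K [cK ->]] | [U [oU ->]]].
  exists [set D | D `&` (fst @` K) = set0]; split.
    by left; exists (fst @` K); split => //; apply: compact_proj.
  move=> D' sD'; rewrite /= !disjE; split.
    by move=> h g [_ hg] Kg; apply: (h g.1) => //; exists g.
  move=> h d hd [g Kg gd]; apply: (h g) => //; split; last by rewrite gd.
  by have [sK _] := cK; apply: sK.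
exists [set D | D `&` (fst @` U) !=set0]; split.
  right; exists (fst @` U); split => //.
  by move=> d [g /(proj1 oU) [? _] <-].
move=> D' sD'; split.
  move=> [d [hd [g Ug gd]]]; exists g; split => //; split; last by rewrite gd.
  exact: (proj1 oU).
by move=> [g [[_ hg] Ug]]; exists g.1; split => //; exists g.
Qed.

Lemma translate7 (R : realType) p k S' :
  chabauty_subbasic (D0 R p k) (@D0_open R p k) S' ->
  exists S, chabauty_subbasic (Gpk R p k) (@Gpk_open R p k) S /\
    forall D', D' `<=` D0 R p k -> (S (pistar R p k D') <-> S' D').
Proof.
case=> [[K [cK ->]] | [U [oU ->]]].
  exists [set H | H `&` [set g | K g.1 /\ g.2 = 1] = set0]; split.
    by left; eexists; split; [apply: compact_lift; exact: cK | by []].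
  move=> D' sD'; rewrite /= !disjE; split.
    move=> h d hd Kd; apply: (h (d, 1)) => //; split => //=.
    by split; [apply: sD' | apply: circle1].
  by move=> h g [_ hg] [Kg _]; apply: (h g.1).
exists [set H | H `&` [set g | U g.1 /\ circle R g.2] !=set0]; split.
  right; eexists; split; last by [].
  split; first by move=> g [/oU ? ?]; split.
  by move=> g [hu hc]; exists 1; split => // w hw _; split.
move=> D' sD'; split.
  by move=> [g [[_ hg] [Ug _]]]; exists g.1.
move=> [d [hd Ud]]; exists (d, 1); split; last by split => //; apply: circle1.
by split => //; split; [apply: sD' | apply: circle1].
Qed.

Lemma part3 (R : realType) p k D : CD R p k D ->
  CG R p k (pistar R p k D) /\ one_dimensional R (pistar R p k D).
Proof.
move=> [sg [sD _]]; rewrite pistarE //; split; last by apply: DxT_onedim; case: sg.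
by split; [apply: DxT_subgroup | apply: DxT_closed].
Qed.

Lemma part4 (R : realType) p k H : CG R p k H -> one_dimensional R H ->
  exists2 D, CD R p k D & pistar R p k D = H.
Proof.
move=> [sg cl] od; have sgD := proj_subgroup sg.
exists (proj R H).
  by split => //; split; [case: sgD | move=> d []].
rewrite pistarE; last by case: sgD.
by rewrite -(proj_eq sg) //; apply: onedim_circle.
Qed.

Lemma notonedim_nbhd (R : realType) p k H : CG R p k H -> ~ (CG R p k H /\ one_dimensional R H) ->
  exists F : set (set (set ((R[i] * R[i]) * R[i]))), finite_set F /\
    (forall S, F S -> chabauty_subbasic (Gpk R p k) (@Gpk_open R p k) S /\ S H) /\
    (forall H', CG R p k H' -> (forall S, F S -> S H') -> ~ (CG R p k H' /\ one_dimensional R H')).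
Proof.
move=> cH nod.
have [w [cw nw]] : exists w, circle R w /\ ~ H (D0_one R, w).
  apply: contra_notP nod => hall; split => //; exists 1; split; first exact: oner_neq0.
  move=> t; have /forallNP h := hall; have := h (cos (2 * pi * (t * 1)) +i* sin (2 * pi * (t * 1)))%C.
  by move=> /not_andP [/(_ (circle_cos_sin _))//|/contrapT].
pose S0 := [set H' : set ((R[i] * R[i]) * R[i]) | H' `&` [set (D0_one R, w)] = set0].
exists [set S0]; split; first exact: finite_set1.
split.
  move=> S ->; split.
    left; exists [set (D0_one R, w)]; split => //; apply: compact_set1.
    by split => //; apply: D0one.
  by apply/disjE => x hx xe; apply: nw; rewrite -xe.
move=> H' cH' hS [_ od']; have := hS S0 erefl; rewrite /S0 /= disjE => h.
by apply: (h (D0_one R, w)) => //; apply: onedim_circle.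
Qed.

Unset Implicit Arguments.

Theorem lemma8 (R : realType) (p k : nat) (hp : prime p) (hk : (0 < k)%N) :
  (* closed 1-dimensional subgroups are exactly the D x T *)
  (forall H : set ((R[i] * R[i]) * R[i]),
     (CG R p k H /\ one_dimensional R H) <->
     (exists D, is_subgroup (D0 R p k) (D0_one R) (@D0_mul R) (@D0_inv R) D /\
                H = [set g | D g.1 /\ circle R g.2])) /\
  (* the set of closed 1-dimensional subgroups is closed in C(G) *)
  chabauty_open (Gpk R p k) (@Gpk_open R p k) (CG R p k)
    (CG R p k `\` [set H | CG R p k H /\ one_dimensional R H]) /\
  (* pi^* maps C(D0) bijectively onto that set ... *)
  (forall D, CD R p k D -> CG R p k (pistar R p k D) /\ one_dimensional R (pistar R p k D)) /\
  (forall H, CG R p k H -> one_dimensional R H -> exists2 D, CD R p k D & pistar R p k D = H) /\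
  (forall D D', CD R p k D -> CD R p k D' -> pistar R p k D = pistar R p k D' -> D = D') /\
  (* ... continuously ... *)
  (forall A, chabauty_open (Gpk R p k) (@Gpk_open R p k) (CG R p k) A ->
     chabauty_open (D0 R p k) (@D0_open R p k) (CD R p k)
       [set D | CD R p k D /\ A (pistar R p k D)]) /\
  (* ... and openly onto its image (with the subspace topology) *)
  (forall B, chabauty_open (D0 R p k) (@D0_open R p k) (CD R p k) B ->
     exists2 A, chabauty_open (Gpk R p k) (@Gpk_open R p k) (CG R p k) A &
       pistar R p k @` B = A `&` [set H | CG R p k H /\ one_dimensional R H]).
Proof.
split.
  move=> H; split.
    move=> [[sg cl] od]; exists (proj R H); split; first exact: proj_subgroup.
    by rewrite -/(DxT R _) -(proj_eq sg) //; apply: onedim_circle.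
  move=> [D [sg ->]]; rewrite -/(DxT R _); have [sD D1 _ _] := sg; split.
    by split; [apply: DxT_subgroup | apply: DxT_closed].
  exact: DxT_onedim.
split.
  split; first by move=> H [].
  move=> H [cH nod]; have [F [fF [hF1 hF2]]] := notonedim_nbhd cH nod.
  by exists F; split => //; split => // H' cH' hS; split => //; apply: hF2.
split; first by move=> D; apply: part3.
split; first by move=> H; apply: part4.
split.
  move=> D D' [[sD _ _ _] _] [[sD' _ _ _] _] e.
  apply/seteqP; split => d hd.
    have : pistar R p k D (d, 1) by split => //; split; [apply: sD | apply: circle1].
    by rewrite e => -[].
  have : pistar R p k D' (d, 1) by split => //; split; [apply: sD' | apply: circle1].
  by rewrite -e => -[].
split.
  move=> A [sA oA]; split; first by move=> D [].
  move=> D [cD AD]; have [F [fF [hF1 hF2]]] := oA _ AD.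
  have : forall S, exists S', chabauty_subbasic (Gpk R p k) (@Gpk_open R p k) S ->
     chabauty_subbasic (D0 R p k) (@D0_open R p k) S' /\
     forall D', D' `<=` D0 R p k -> (S' D' <-> S (pistar R p k D')).
    move=> S; case: (pselect (chabauty_subbasic (Gpk R p k) (@Gpk_open R p k) S)) => hS.
      by have [S' hS'] := translate6 hS; exists S'.
    by exists set0.
  case/choice => g hg.
  have sD : D `<=` D0 R p k by case: cD => -[].
  exists (g @` F); split; first exact: finite_image.
  split.
    move=> _ [S FS <-]; have [sb Sp] := hF1 S FS; have [sb' e] := hg S sb.
    by split => //; rewrite e.
  move=> D' cD' hall; split => //; apply: hF2; first by have [] := part3 cD'.
  move=> S FS; have [sb _] := hF1 S FS; have [_ e] := hg S sb.
  have sD' : D' `<=` D0 R p k by case: cD' => -[].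
  by rewrite -e //; apply: hall; exists S.
move=> B [sB oB].
pose A := [set H | CG R p k H /\ (~ (CG R p k H /\ one_dimensional R H) \/
   exists2 D, B D & pistar R p k D = H)].
exists A.
  split; first by move=> H [].
  move=> H [cH [nod | [D BD eH]]].
    have [F [fF [hF1 hF2]]] := notonedim_nbhd cH nod.
    by exists F; split => //; split => // H' cH' hS; split => //; left; apply: hF2.
  have [F' [fF' [hF1 hF2]]] := oB _ BD.
  have : forall S', exists S, chabauty_subbasic (D0 R p k) (@D0_open R p k) S' ->
     chabauty_subbasic (Gpk R p k) (@Gpk_open R p k) S /\
     forall D', D' `<=` D0 R p k -> (S (pistar R p k D') <-> S' D').
    move=> S'; case: (pselect (chabauty_subbasic (D0 R p k) (@D0_open R p k) S')) => hS.
      by have [S hS''] := translate7 hS; exists S.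
    by exists set0.
  case/choice => g hg.
  have sD : D `<=` D0 R p k by case: (sB _ BD) => -[].
  exists (g @` F'); split; first exact: finite_image.
  split.
    move=> _ [S' FS' <-]; have [sb Sp] := hF1 S' FS'; have [sb' e] := hg S' sb.
    by split => //; rewrite -eH e.
  move=> H' cH' hall; split => //.
  case: (pselect (one_dimensional R H')) => od'; last by left => -[].
  right; have [D' cD' eH'] := part4 cH' od'; exists D' => //.
  have sD' : D' `<=` D0 R p k by case: cD' => -[].
  apply: hF2 => // S' FS'; have [sb _] := hF1 S' FS'; have [_ e] := hg S' sb.
  by rewrite -e // eH'; apply: hall; exists S'.
apply/seteqP; split.
  move=> _ [D BD <-]; have [cG od] := part3 (sB _ BD).
  by split => //; split => //; right; exists D.
by move=> H [[cH [nod | [D BD eH]]] od] //; exists D.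
Qed.
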